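(* Let $f:\mathbb{R}\to\mathbb{C}$ be a Lebesgue measurable function which is not zero almost everywhere, has faster than exponential decay, i.e. $\lim_{x\to\infty}|f(x)|e^{cx}=0$ for every $c>0$, and is quasi-monotone, i.e. for every $b>0$ there exists $C=C(b)>0$ such that $|f(x+b)|<C|f(x)|$ for all $x>0$. Then $\mathcal G(f,\mathbb{R}^2)$ is linearly independent.
   Context: For $a,b\in\mathbb{R}$, $M_aT_bf(x)=e^{2\pi i a x}f(x-b)$, and $\mathcal G(f,\mathbb{R}^2)=\{M_aT_bf:a,b\in\mathbb{R}\}$. Measurable functions equal a.e. are identified; $\mathcal G(f,\mathbb{R}^2)$ is linearly independent if every finite linear combination $\sum c_{(a,b)}M_aT_bf$ over distinct pairs $(a,b)$ with coefficients not all zero is not zero almost everywhere. *)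

(* Defs.v *)
From HB Require Import structures.
From mathcomp Require Import all_boot all_order all_algebra.
From mathcomp Require Import all_classical all_reals all_analysis.
From mathcomp Require Import measurable_realfun.
From mathcomp Require Import complex.
Set Implicit Arguments. Unset Strict Implicit. Unset Printing Implicit Defensive.
Import Order.TTheory GRing.Theory Num.Theory.
Local Open Scope ring_scope.
Local Open Scope complex_scope.
Local Open Scope classical_set_scope.

Definition cabs (R : realType) (z : R[i]) : R := Normc.normc z.

Definition cexpi (R : realType) (t : R) : R[i] := (cos t) +i* (sin t).

Definition MT (R : realType) (a b : R) (f : R -> R[i]) : R -> R[i] :=
  fun x => cexpi (2 * pi * a * x) * f (x - b).

(* Lebesgue measurability of a complex valued function on R: the real and
   imaginary parts are Lebesgue measurable, i.e. preimages of Borel sets lie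
   in the completed Lebesgue sigma-algebra
   {B u N | B Borel, N Lebesgue-negligible} (completed_algebra_gen). *)
Definition Lmeasurable_fun (R : realType) (g : R -> R) : Prop :=
  forall B : set R, measurable B ->
    completed_algebra_gen (@lebesgue_measure R) (g @^-1` B).

Definition cmeasurable (R : realType) (f : R -> R[i]) : Prop :=
  Lmeasurable_fun (fun x => complex.Re (f x)) /\
  Lmeasurable_fun (fun x => complex.Im (f x)).

Definition ae_zero (R : realType) (g : R -> R[i]) : Prop :=
  {ae (@lebesgue_measure R), forall x, g x = 0}.

(* G(f, R^2) is linearly independent: every finite linear combination over
   distinct pairs (a_k, b_k) with not all coefficients zero is not a.e. zero *)
Definition gabor_lin_indep (R : realType) (f : R -> R[i]) : Prop :=
  forall (n : nat) (a b : 'I_n -> R) (c : 'I_n -> R[i]),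
    injective (fun k => (a k, b k)) ->
    (exists k, c k != 0) ->
    ~ ae_zero (fun x => \sum_(k < n) c k * MT (a k) (b k) f x).

(* Main.v *)
Require Import Defs.
From HB Require Import structures.
From mathcomp Require Import all_boot all_order all_algebra.
From mathcomp Require Import all_classical all_reals all_analysis.
From mathcomp Require Import complex ring lra.
Set Implicit Arguments. Unset Strict Implicit. Unset Printing Implicit Defensive.
Import Order.TTheory GRing.Theory Num.Theory.
Local Open Scope ring_scope.
Local Open Scope classical_set_scope.

Section S.
Variable R : realType.
Variable t : R.
Notation T := (measurableTypeR R).
Definition shf (x : T) : T := (x + t)%R.
Lemma mshf : measurable_fun setT shf.
Proof. exact: measurable_realfun.measurable_funD. Qed.
Definition smu (A : set T) := (@lebesgue_measure R) (shf @^-1` A).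

Local Open Scope ereal_scope.
Let smu0 : smu set0 = 0.
Proof. by rewrite /smu preimage_set0 measure0. Qed.

Let smu_ge0 A : 0 <= smu A.
Proof. by apply: measure_ge0. Qed.

Let smu_sigma_additive : semi_sigma_additive smu.
Proof.
move=> F mF tF mUF; rewrite /smu preimage_bigcup.
apply: measure_semi_sigma_additive.
- by move=> n; rewrite -[X in measurable X]setTI; exact: mshf.
- apply/trivIsetP => /= i j _ _ ij; rewrite -preimage_setI.
  by move/trivIsetP : tF => /(_ _ _ _ _ ij) ->//; rewrite preimage_set0.
- by rewrite -preimage_bigcup -[X in measurable X]setTI; exact: mshf.
Qed.

HB.instance Definition _ := isMeasure.Build _ _ _
  smu smu0 smu_ge0 smu_sigma_additive.

Local Close Scope ereal_scope.
Lemma smu_leb (A : set T) : measurable A -> smu A = lebesgue_measure A.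
Proof.
move=> mA; apply/esym; have := @lebesgue_measure_unique R smu; apply => //.
move=> X [[a b] _ <-] /=.
rewrite /smu.
have -> : shf @^-1` `]a, b]%classic = `](a - t), (b - t)]%classic.
  apply/seteqP; split => x /=; rewrite !in_itv /= /shf.
    by rewrite ltrBlDr lerBrDr.
  by rewrite ltrBlDr lerBrDr.
rewrite !lebesgue_measure_itv /= !lte_fin ltrD2r.
by case: ifP => // _; rewrite -!EFinD; congr (_%:E); rewrite opprB addrA subrK.
Qed.

Lemma ae_shift (P : R -> Prop) :
  {ae (@lebesgue_measure R), forall x, P x} ->
  {ae (@lebesgue_measure R), forall x, P (x + t)%R}.
Proof.
move=> [A [mA A0 PA]]; exists (shf @^-1` A); split.
- by rewrite -[X in measurable X]setTI; exact: mshf.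
- by have := smu_leb mA; rewrite /smu => ->.
- by move=> x /= Px; apply: PA.
Qed.
End S.

Lemma ae_exists_pos (R : realType) (P : R -> Prop) :
  {ae (@lebesgue_measure R), forall x, P x} -> exists x, (0 < x)%R /\ P x.
Proof.
move=> [A [mA A0 PA]].
apply: contrapT => H.
have sub : `]0%R, 1%R[%classic `<=` A.
  move=> x; rewrite /= in_itv /= => /andP[x0 _]; apply: PA => /= Px.
  by apply: H; exists x.
have := le_measure (@lebesgue_measure R) _ _ sub.
rewrite !inE => /(_ (measurable_itv _) mA) h.
have h2 : (lebesgue_measure A <= 0)%E by rewrite A0.
have := le_trans h h2.
have := @lebesgue_measure_itv R `]0%R, 1%R[%R.
rewrite /= lte_fin ltr01 -EFinD subr0 => ->.
by rewrite lee_fin ler10.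
Qed.
Section C.
Variable R : realType.
Implicit Types (x y z : R[i]) (u v : R).

Lemma cabs_ge0 z : 0 <= cabs z.
Proof. by case: z => a b; rewrite /cabs /= sqrtr_ge0. Qed.

Lemma cabsM x y : cabs (x * y) = cabs x * cabs y.
Proof. exact: Normc.normcM. Qed.

Lemma cabsD x y : cabs (x + y) <= cabs x + cabs y.
Proof. exact: (@le_normcD R x y). Qed.

Lemma cabsN x : cabs (- x) = cabs x.
Proof. exact: (@normcN R x). Qed.

Lemma cabs0 : cabs (0 : R[i]) = 0.
Proof. exact: Normc.normc0. Qed.

Lemma cabs_eq0 z : cabs z = 0 -> z = 0.
Proof. exact: Normc.eq0_normc. Qed.

Lemma cabsB x y : cabs (x - y) <= cabs x + cabs y.
Proof. by rewrite (le_trans (cabsD _ _)) // cabsN. Qed.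

Lemma cabs_sum (I : Type) (r : seq I) (P : pred I) (F : I -> R[i]) :
  cabs (\sum_(i <- r | P i) F i) <= \sum_(i <- r | P i) cabs (F i).
Proof.
elim/big_rec2: _ => [|i s1 s2 _ h]; first by rewrite cabs0.
by rewrite (le_trans (cabsD _ _)) // lerD2l.
Qed.

Lemma cabs_cexpi u : cabs (cexpi u) = 1.
Proof. by rewrite /cabs /cexpi /= cos2Dsin2 sqrtr1. Qed.

Lemma cexpiD u v : cexpi (u + v) = cexpi u * cexpi v.
Proof.
rewrite /cexpi cosD sinD; apply/eqP; rewrite eq_complex /=.
by rewrite !eqxx /= [sin u * cos v]mulrC addrC.
Qed.

Lemma cexpi_inj u v : `|u - v| < pi -> cexpi u = cexpi v -> u = v.
Proof.
move=> huv [hc hs].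
have s0 : sin (u - v) = 0 by rewrite sinB hc hs mulrC subrr.
apply/eqP; rewrite -subr_eq0; apply/negPn/negP => neq.
have [lt0|gt0] := ltrP (u - v) 0.
- have : 0 < sin (- (u - v)).
    apply: sin_gt0_pi; rewrite oppr_gt0 lt0 /=.
    by rewrite ltr0_norm in huv.
  by rewrite sinN s0 oppr0 ltxx.
- have : 0 < sin (u - v).
    apply: sin_gt0_pi; rewrite lt_neqAle eq_sym neq gt0 /=.
    by rewrite ger0_norm in huv.
  by rewrite s0 ltxx.
Qed.

Section Trig.
Variable n : nat.
Variable om : 'I_n -> R.
Variable h : R.

Definition Qw (w : 'I_n -> R[i]) (y : R) := \sum_(k < n) w k * cexpi (om k * y).

Definition distinct_on (w : 'I_n -> R[i]) := forall k l, w k != 0 -> w l != 0 -> k != l ->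
  cexpi (om k * h) != cexpi (om l * h).

Lemma cabs_gt0 z : z != 0 -> 0 < cabs z.
Proof.
move=> z0; rewrite lt_neqAle cabs_ge0 andbT; apply/eqP => /esym/cabs_eq0.
by move/eqP; rewrite (negbTE z0).
Qed.

Lemma Qw_diff (w : 'I_n -> R[i]) k0 (y : R) :
  Qw (fun k => w k * (cexpi (om k * h) - cexpi (om k0 * h))) y =
  Qw w (y + h) - cexpi (om k0 * h) * Qw w y.
Proof.
rewrite /Qw mulr_sumr -sumrB; apply: eq_bigr => k _.
rewrite [om k * (y + h)]mulrDr cexpiD; ring.
Qed.

Lemma trig_ind m : forall w : 'I_n -> R[i], #|[pred k | w k != 0]| = m.+1 -> distinct_on w ->
  exists2 del : R, 0 < del & forall z : R, exists j : nat, (j <= m)%N /\ del <= cabs (Qw w (z + j%:R * h)).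
Proof.
elim: m => [|m IH] w cw dw.
- have [k0 Hk0] := mem_card1 cw.
  have wk0 : w k0 != 0 by have := Hk0 k0; rewrite !inE eqxx.
  exists (cabs (w k0)); first exact: cabs_gt0.
  move=> z; exists 0%N; split => //.
  rewrite /Qw (bigD1 k0) //= big1 ?addr0; first by rewrite cabsM cabs_cexpi mulr1.
  move=> k kk0; have := Hk0 k; rewrite !inE (negbTE kk0) => /negbT.
  by rewrite negbK => /eqP ->; rewrite mul0r.
- have [k0 Hk0] : exists k0, k0 \in [pred k | w k != 0].
    by apply/card_gt0P; rewrite cw.
  have wk0 : w k0 != 0 by [].
  set w' := fun k => w k * (cexpi (om k * h) - cexpi (om k0 * h)).
  have supp' : forall k, (w' k != 0) = (w k != 0) && (k != k0).
    move=> k; rewrite /w' mulf_eq0 negb_or subr_eq0.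
    have [->|kk0] := eqVneq k k0; first by rewrite eqxx andbF.
    rewrite andbT; case wk: (w k != 0) => //=.
    exact: dw.
  have cw' : #|[pred k | w' k != 0]| = m.+1.
    move: cw; rewrite (cardD1 k0) Hk0 add1n => -[<-].
    by apply: eq_card => k; rewrite !inE supp' andbC.
  have dw' : distinct_on w'.
    move=> k l; rewrite !supp' => /andP[wk _] /andP[wl _]; exact: dw.
  have [del' del'0 Hd] := IH w' cw' dw'.
  exists (del' / 2); first by lra.
  move=> z; have [j [jm Hj]] := Hd z.
  rewrite Qw_diff in Hj.
  have := le_trans Hj (cabsB _ _); rewrite cabsM cabs_cexpi mul1r => Hj2.
  have [H1|H1] := lerP (del' / 2) (cabs (Qw w (z + j%:R * h + h))).
  + exists j.+1; split => //.
    have -> : (z + j.+1%:R * h = z + j%:R * h + h :> R).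
      by rewrite -[in LHS]natr1 mulrDl mul1r addrA.
    exact: H1.
  + exists j; split; first by apply: leqW.
    lra.
Qed.

Lemma trig_lower (w : 'I_n -> R[i]) : (exists k, w k != 0) -> distinct_on w ->
  exists2 del : R, 0 < del & forall z : R, exists j : nat, (j < n)%N /\ del <= cabs (Qw w (z + j%:R * h)).
Proof.
move=> [k0 wk0] dw.
have : (0 < #|[pred k | w k != 0%R]|)%N by apply/card_gt0P; exists k0.
case cw: #|[pred k | w k != 0]| => [//|m] _.
have [del del0 Hd] := @trig_ind m w cw dw.
exists del => // z; have [j [jm Hj]] := Hd z; exists j; split => //.
have := max_card [pred k | w k != 0]; rewrite cw card_ord => mn.
exact: leq_ltn_trans jm mn.
Qed.
End Trig.
End C.
Section T.
Variable R : realType.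
Lemma exists_argmax n (P : pred 'I_n) (v : 'I_n -> R) k1 : P k1 ->
  exists2 k, P k & forall l, P l -> v l <= v k.
Proof. by move=> Pk1; case: (arg_maxP v Pk1) => k Pk Hk; exists k => // l Pl; exact: Hk. Qed.

Lemma exists_lb n (P : pred 'I_n) (v : 'I_n -> R) : (forall k, P k -> 0 < v k) ->
  exists2 e : R, 0 < e & forall k, P k -> e <= v k.
Proof.
move=> Hv; case: (pickP P) => [k1 Pk1|P0]; last by exists 1 => // k; rewrite P0.
have [k Pk Hk] := @exists_argmax n P (fun k => - v k) k1 Pk1.
by exists (v k); [exact: Hv | move=> l Pl; have := Hk l Pl; rewrite lerN2].
Qed.

Lemma elem_le_sum n (F : 'I_n -> R) k : (forall l, 0 <= F l) -> F k <= \sum_l F l.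
Proof. by move=> F0; rewrite (bigD1 k) //= lerDl sumr_ge0. Qed.
End T.

Unset Implicit Arguments.
Theorem theorem3p4 (R : realType) (f : R -> R[i]) :
  cmeasurable f ->
  ~ ae_zero f ->
  (forall c : R, 0 < c ->
     (fun x : R => cabs (f x) * expR (c * x)) @ +oo --> 0) ->
  (forall b : R, 0 < b -> exists C : R, 0 < C /\
     forall x : R, 0 < x -> cabs (f (x + b)) < C * cabs (f x)) ->
  gabor_lin_indep f.
Proof.
move=> _ _ hdec hqm n a b c inj [k1 ck1] hae.
set g := fun x => \sum_(k < n) c k * MT (a k) (b k) f x.
have fnz : forall x : R, 0 < x -> f x != 0.
  move=> x x0; have [C [C0 HC]] := hqm 1 ltr01.
  apply/eqP => fx0; have := HC x x0; rewrite fx0 cabs0 mulr0.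
  by rewrite ltNge cabs_ge0.
have [Cf HCf] : exists Cf : R -> R, forall be, 0 < be -> forall x, 0 < x ->
    cabs (f (x + be)) <= `|Cf be| * cabs (f x).
  have H : forall be : R, exists C : R, 0 < be -> forall x, 0 < x ->
      cabs (f (x + be)) <= `|C| * cabs (f x).
    move=> be; case: (ltrP 0 be) => [be0|be0].
      have [C [C0 HC]] := hqm be be0; exists C => _ x x0.
      by rewrite gtr0_norm //; apply/ltW/HC.
    by exists 0.
  by case: (choice H) => Cf HCf; exists Cf.
have [kB ckB HB] := @exists_argmax R n (fun k => c k != 0) b k1 ck1.
set B := b kB.
have [D0 D00 HD0] : exists2 D0 : R, 0 < D0 & forall k, c k != 0 -> b k < B -> D0 <= B - b k.
  have hpos : forall k, (c k != 0) && (b k < B) -> 0 < B - b k.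
    by move=> k /andP[_]; rewrite subr_gt0.
  have [e e0 He] := @exists_lb R n (fun k => (c k != 0) && (b k < B)) (fun k => B - b k) hpos.
  by exists e => // k ck bk; apply: He; rewrite ck bk.
pose S k := (c k != 0) && (b k == B).
pose w k := if S k then c k else 0.
pose om k := 2 * pi * a k.
pose A := 1 + \sum_k `|a k|.
have A0 : 0 < A by rewrite ltr_pwDl // sumr_ge0.
have aA : forall k, `|a k| <= A.
  move=> k; apply: (le_trans (@elem_le_sum R n (fun k => `|a k|) k _)) => //.
  by rewrite lerDr.
pose h := Num.min (D0 / (2 * n.+1%:R)) (1 / (8 * A)).
have h0 : 0 < h.
  rewrite lt_min; apply/andP; split; first by rewrite divr_gt0 // mulr_gt0.
  by rewrite divr_gt0 // mulr_gt0.
have hD : n.+1%:R * h <= D0 / 2.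
  have : h <= D0 / (2 * n.+1%:R) by rewrite ge_min lexx.
  rewrite ler_pdivlMr ?mulr_gt0 // => hh.
  rewrite ler_pdivlMr //; apply: le_trans hh; rewrite le_eqVlt; apply/orP; left.
  apply/eqP; ring.
have hA : 8 * A * h <= 1.
  have : h <= 1 / (8 * A) by rewrite ge_min lexx orbT.
  by rewrite ler_pdivlMr ?mulr_gt0 // mulrC.
have dw : distinct_on om h w.
  move=> k l; rewrite /w; case Sk: (S k); last by rewrite eqxx.
  case Sl: (S l); last by rewrite eqxx.
  move=> _ _ kl; apply/eqP => /cexpi_inj eq.
  have [bk bl] : b k = B /\ b l = B.
    by move: Sk Sl; rewrite /S => /andP[_ /eqP ->] /andP[_ /eqP ->].
  have hlt : `|om k * h - om l * h| < pi.
    have -> : om k * h - om l * h = (2 * pi * h) * (a k - a l) by rewrite /om; ring.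
    rewrite normrM (gtr0_norm (mulr_gt0 (mulr_gt0 _ (pi_gt0 R)) h0)) //.
    apply: (le_lt_trans (y := (2 * pi * h) * (2 * A))).
      rewrite ler_pM2l ?mulr_gt0 ?pi_gt0 //.
      apply: (le_trans (ler_normB _ _)).
      by have := aA k; have := aA l; lra.
    have : 0 < pi := pi_gt0 R.
    have : pi * (8 * A * h) <= pi * 1 by rewrite ler_pM2l ?pi_gt0.
    move=> H1 H2; nra.
  have eqa : a k = a l.
    have := eq hlt; rewrite /om => e.
    have nz : 2 * pi * h != 0 by rewrite gt_eqF // !mulr_gt0 ?pi_gt0.
    apply: (mulfI nz); move: e; rewrite -!mulrA [a k * h]mulrC [a l * h]mulrC.
    by [].
  by move/negP: kl; apply; apply/eqP; apply: inj => /=; rewrite eqa bk bl.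
have [del del0 Hdel] : exists2 del : R, 0 < del & forall z : R, exists j : nat,
    (j < n)%N /\ del <= cabs (Qw om w (z + j%:R * h)).
  apply: trig_lower dw; exists kB; rewrite /w /S ckB eqxx /=; exact: ckB.
pose s (j : nat) := j.+1%:R * h.
pose Kj (j : nat) := \sum_k cabs (c k) * `|Cf (B - b k - s j)|.
have Kj0 : forall j, 0 <= Kj j.
  by move=> j; apply: sumr_ge0 => k _; rewrite mulr_ge0 ?cabs_ge0.
pose K := 1 + \sum_(j < n) Kj j.
have KjK : forall j, (j < n)%N -> Kj j <= K.
  move=> j jn; apply: (le_trans (@elem_le_sum R n (fun j => Kj j) (Ordinal jn) _)) => //.
  by rewrite lerDr.
have K0 : 0 < K by rewrite ltr_pwDl // sumr_ge0.
have sD : forall j, (j < n)%N -> s j < D0.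
  move=> j jn; apply: (le_lt_trans _ (_ : D0 / 2 < D0)); last by lra.
  apply: le_trans hD; rewrite /s ler_pM2r // ler_nat ltnS; exact: ltnW.
have sh : forall j, h <= s j.
  move=> j; rewrite /s; have : 1 <= j.+1%:R :> R by rewrite ler1n.
  by move=> H1; nra.
have key : forall (y : R) j, 0 < y -> (j < n)%N -> g (y + B) = 0 ->
    cabs (Qw om w (y + B)) * cabs (f y) <= K * cabs (f (y + s j)).
  move=> y j y0 jn gy.
  have split : g (y + B) = Qw om w (y + B) * f y +
      \sum_(k < n | ~~ S k) c k * MT (a k) (b k) f (y + B).
    rewrite /g (bigID S) /=; congr (_ + _).
    rewrite /Qw mulr_suml big_mkcond /=; apply: eq_bigr => k _.
    rewrite /w /MT; case Sk: (S k); last by rewrite !mul0r.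
    move: Sk; rewrite /S => /andP[_ /eqP ->]; rewrite addrK /om mulrA.
    by [].
  have e1 : Qw om w (y + B) * f y = - \sum_(k < n | ~~ S k) c k * MT (a k) (b k) f (y + B).
    by apply/eqP; rewrite -addr_eq0 -split gy.
  rewrite -cabsM e1 cabsN.
  apply: (le_trans (cabs_sum _ _ _)).
  apply: (@le_trans _ _ (\sum_(k < n | ~~ S k) cabs (c k) * `|Cf (B - b k - s j)| * cabs (f (y + s j)))).
    apply: ler_sum => k Sk; rewrite /MT cabsM cabsM cabs_cexpi mul1r -mulrA.
    have [->|ck] := eqVneq (c k) 0; first by rewrite cabs0 !mul0r.
    rewrite ler_pM2l ?cabs_gt0 //.
    have bkB : b k < B.
      rewrite lt_neqAle HB // andbT; apply: contra Sk => /eqP bkB.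
      by rewrite /S ck bkB eqxx.
    have be0 : 0 < B - b k - s j.
      by have := HD0 k ck bkB; have := sD j jn; lra.
    have ys : 0 < y + s j by have := sh j; lra.
    have E : y + s j + (B - b k - s j) = y + B - b k by ring.
    by have := HCf _ be0 (y + s j) ys; rewrite E.
  have ys : 0 < y + s j by have := sh j; lra.
  rewrite -mulr_suml ler_pM2r; last exact: cabs_gt0 (fnz _ ys).
  apply: le_trans (KjK j jn); rewrite /Kj [X in _ <= X](bigID S) /= lerDr.
  by apply: sumr_ge0 => k _; rewrite mulr_ge0 ?cabs_ge0.
pose c0 := (1 + K / del) / h.
have c00 : 0 < c0 by rewrite divr_gt0 // ltr_pwDl // divr_ge0 // ltW.
have ec0 : forall j, K / del <= expR (c0 * s j).
  move=> j; have H1 : c0 * h <= c0 * s j by rewrite ler_pM2l.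
  have H2 : c0 * h = 1 + K / del by rewrite /c0 divfK // gt_eqF.
  have := expR_ge1Dx (c0 * s j); lra.
have hae' : {ae lebesgue_measure, forall x, forall m : nat, g (x + (m%:R * h + B)) = 0}.
  apply: ae_foralln => m; exact: (ae_shift (m%:R * h + B) hae).
have [y0 [y00 Hy0]] := ae_exists_pos hae'.
have step : forall m : nat, exists j, (j < n)%N /\ del <= cabs (Qw om w (y0 + (m + j.+1)%:R * h + B)).
  move=> m; have [j [jn Hj]] := Hdel (y0 + m%:R * h + h + B).
  exists j; split => //.
  have -> : y0 + (m + j.+1)%:R * h + B = y0 + m%:R * h + h + B + j%:R * h.
    by rewrite natrD -natr1; ring.
  exact: Hj.
have [j1 [j1n Hj1]] := step 0%N.
set m1 := (0 + j1.+1)%N in Hj1.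
set y1 := y0 + m1%:R * h.
have y10 : 0 < y1.
  have : 0 <= m1%:R * h by rewrite mulr_ge0 // ltW.
  by rewrite /y1; lra.
set AA0 := cabs (f y1) * expR (c0 * y1).
have AA00 : 0 < AA0 by rewrite mulr_gt0 ?expR_gt0 // cabs_gt0 // fnz.
have inv : forall N : nat, exists m : nat,
    [/\ del <= cabs (Qw om w (y0 + m%:R * h + B)),
       AA0 <= cabs (f (y0 + m%:R * h)) * expR (c0 * (y0 + m%:R * h)) &
       y1 + N%:R * h <= y0 + m%:R * h].
  elim => [|N [m [Hq HA Hy]]].
    by exists m1; split => //; rewrite mul0r addr0.
  have [j [jn Hj]] := step m.
  exists (m + j.+1)%N.
  set y := y0 + m%:R * h in Hq HA Hy.
  have ey : y0 + (m + j.+1)%:R * h = y + s j by rewrite /y /s natrD mulrDl addrA.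
  have ypos : 0 < y.
    have : 0 <= m%:R * h by rewrite mulr_ge0 // ltW.
    by rewrite /y; lra.
  have gy : g (y + B) = 0 by have := Hy0 m; rewrite addrA.
  have ky := key y j ypos jn gy.
  have kd : del * cabs (f y) <= K * cabs (f (y + s j)).
    by apply: le_trans ky; rewrite ler_wpM2r ?cabs_ge0.
  split; first exact: Hj.
  - apply: (le_trans HA); rewrite ey [c0 * (y + _)]mulrDr expRD.
    set E := expR (c0 * y); set F' := cabs (f (y + s j)).
    have E0 : 0 < E by apply: expR_gt0.
    have F0 : 0 <= F' by apply: cabs_ge0.
    have h1 : cabs (f y) <= F' * (K / del).
      by rewrite mulrA ler_pdivlMr // mulrC [F' * K]mulrC.
    have h2 : F' * (K / del) <= F' * expR (c0 * s j) by rewrite ler_wpM2l.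
    have h3 := le_trans h1 h2.
    by rewrite mulrCA [E * _]mulrC ler_wpM2r // ltW.
  - rewrite ey -natr1 mulrDl mul1r addrA; have := sh j; lra.
have := hdec c0 c00; move/cvgrPdist_lt => /(_ AA0 AA00) [M [Mr HM]].
pose r := `|M - y1| / h.
have r0 : 0 <= r by rewrite divr_ge0 // ltW.
have [m [_ HA Hy]] := inv (Num.Def.archi_bound r).
have hr := archi_boundP r0.
have : M < y0 + m%:R * h.
  apply: lt_le_trans Hy.
  have : `|M - y1| < (Num.Def.archi_bound r)%:R * h by rewrite -ltr_pdivrMr.
  have := ler_norm (M - y1); lra.
move/HM; rewrite sub0r normrN ger0_norm ?mulr_ge0 ?cabs_ge0 ?expR_ge0 //.
by rewrite ltNge HA.
Qed.
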